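(* Let $N,M\ge1$, $\mathbf{y}\in\mathbb{C}^M$, $\mathbf{x}\in\mathbb{R}^N$, $\mu_1,\dots,\mu_N\in\mathbb{R}$, $\sigma_1,\dots,\sigma_N>0$, $\delta^2>0$, $\sigma_h^2>0$, $\sigma_w^2>0$, and let $c=\exp\left(\frac{2\pi j}{N+1}\right)$ with $j=\sqrt{-1}$. Consider latent variables $T\in\{0,1,\dots,N\}$ and $\boldsymbol\theta=[\theta_1,\dots,\theta_N]^T\in(0,1)^N$ with joint density (with observation $\mathbf{y}$) $$p(\mathbf{y},T=m,\boldsymbol\theta\mid\boldsymbol\Phi)=\frac{1}{[2\pi(\sigma_h^2m+\sigma_w^2)]^M}\exp\left(-\frac{\|\mathbf{y}\|_2^2}{2(\sigma_h^2m+\sigma_w^2)}\right)\cdot P(m\mid\boldsymbol\theta)\cdot p(\boldsymbol\theta\mid\mathbf{x}),$$ where $P(m\mid\boldsymbol\theta)=\frac{1}{N+1}\sum_{\ell=0}^N c^{-\ell m}\prod_{k=1}^N[1+(c^\ell-1)\theta_k]$ (the Poisson-binomial probability of $m$ successes in independent Bernoulli trials with success probabilities $\theta_1,\dots,\theta_N$) and $$p(\boldsymbol\theta\mid\mathbf{x})=\left(\prod_{n=1}^N\frac{\sigma_n}{\theta_n-\theta_n^2}\right)\frac{1}{(2\pi)^{N/2}\delta^N}\exp\left(-\frac{\sum_{n=1}^N\left(-\sigma_n\log\left(\frac{1}{\theta_n}-1\right)+\mu_n-x_n\right)^2}{2\delta^2}\right).$$ Let $q(T)$ be a probability mass function on $\{0,\dots,N\}$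 and $q(\theta_1),\dots,q(\theta_N)$ probability densities on $(0,1)$, and let $\mathbb{E}$ denote expectation with respect to the product distribution $q(T)\prod_n q(\theta_n)$. Then the mean-field (variational E-step) updates $$q^*(T)\propto\exp\left\{\mathbb{E}_{\boldsymbol\theta}\left[\log p(\mathbf{y},T,\boldsymbol\theta\mid\boldsymbol\Phi)\right]\right\},\qquad q^*(\theta_n)\propto\exp\left\{\mathbb{E}_{T,\boldsymbol\theta\setminus\theta_n}\left[\log p(\mathbf{y},T,\boldsymbol\theta\mid\boldsymbol\Phi)\right]\right\}$$ are given by $$q^*(T=m)=\frac{g_a(m)}{\sum_{k=0}^N g_a(k)},\qquad q^*(\theta_n=z_n)=\frac{g_b(z_n)}{\int_0^1 g_b(z_n)\,dz_n},$$ where $$g_a(m)=\frac{\mathcal{F}_1(m)}{(\sigma_w^2+m\sigma_h^2)^M}\exp\left\{-\frac{\|\mathbf{y}\|_2^2}{2(\sigma_w^2+m\sigma_h^2)}\right\},$$ $$g_b(z_n)=\frac{\mathcal{F}_2(z_n)}{z_n(1-z_n)}\exp\left\{-\frac{1}{2\delta^2}\left(-\sigma_n\log\left(\frac{1}{z_n}-1\right)+\mu_n-x_n\right)^2\right\},$$ $$\mathcal{F}_1(m)=\exp\left\{\mathbb{E}_{\boldsymbol\theta}\left(\log\Big(\sum_{\ell=0}^N c^{-\ell m}\prod_{k=1}^N[1+(c^\ell-1)\theta_k]\Big)\right)\right\},$$ $$\mathcal{F}_2(z_n)=\left.\exp\left\{\mathbb{E}_{T,\boldsymbol\theta\setminus\theta_n}\left(\log\Big(\sum_{\ell=0}^N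 c^{-\ell T}\prod_{k=1}^N[1+(c^\ell-1)\theta_k]\Big)\right)\right\}\right|_{\theta_n=z_n}.$$
   Context: $\boldsymbol\Phi=\{\mathbf{x},\delta^2,\sigma_h^2,\sigma_w^2\}$ is the parameter set. $\mathbb{E}_{\boldsymbol\theta}$ is expectation over $\boldsymbol\theta\sim\prod_k q(\theta_k)$; $\mathbb{E}_{T,\boldsymbol\theta\setminus\theta_n}$ is expectation over $T\sim q(T)$ and $\theta_k\sim q(\theta_k)$, $k\ne n$, independently, with $\theta_n$ held fixed. The sum $\sum_{\ell}c^{-\ell m}\prod_k[1+(c^\ell-1)\theta_k]$ equals $(N+1)P(m\mid\boldsymbol\theta)$, a positive real number. Expectations are assumed finite. *)

(* Defs.v *)
From HB Require Import structures.
From mathcomp Require Import all_boot all_order all_algebra.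
From mathcomp Require Import all_classical all_reals all_analysis.
From mathcomp Require Import complex.
Set Implicit Arguments. Unset Strict Implicit. Unset Printing Implicit Defensive.
Import Order.TTheory GRing.Theory Num.Theory.
Local Open Scope ring_scope.
Local Open Scope classical_set_scope.

Section Model.
Variable R : realType.
Local Notation C := (complex.complex R).
Local Notation Re := (@complex.Re R).
Local Notation Im := (@complex.Im R).
Local Notation rC x := (complex.real_complex R x).

(* c = exp(2 pi j/(N+1)), written in Euler form cos + j sin *)
Definition cunit (N : nat) : C :=
  complex.Complex (cos (2 * pi / N.+1%:R)) (sin (2 * pi / N.+1%:R)).

Definition upd (th : nat -> R) (k : nat) (t : R) : nat -> R :=
  fun j => if j == k then t else th j.

Definition Ssum (N m : nat) (th : nat -> R) : C :=
  \sum_(l < N.+1) (cunit N ^- (l * m)%N *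
     \prod_(k < N) (1 + (cunit N ^+ l - 1) * rC (th k))).

(* Poisson-binomial pmf P(m | theta) (S is a positive real, we take its real part) *)
Definition PB (N m : nat) (th : nat -> R) : R := Re (Ssum N m th) / N.+1%:R.

Definition ynorm2 (M : nat) (y : 'I_M -> C) : R :=
  \sum_(i < M) ((Re (y i)) ^+ 2 + (Im (y i)) ^+ 2).

Definition prior (N : nat) (x mu sig : 'I_N -> R) (delta2 : R) (th : nat -> R) : R :=
  (\prod_(n < N) (sig n / (th n - th n ^+ 2))) *
  (1 / ((Num.sqrt (2 * pi)) ^+ N * (Num.sqrt delta2) ^+ N)) *
  expR (- (\sum_(n < N) (- sig n * ln (1 / th n - 1) + mu n - x n) ^+ 2)
          / (2 * delta2)).

Definition joint (N M : nat) (y : 'I_M -> C) (x mu sig : 'I_N -> R)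
    (delta2 sh2 sw2 : R) (m : nat) (th : nat -> R) : R :=
  1 / (2 * pi * (sh2 * m%:R + sw2)) ^+ M *
  expR (- ynorm2 y / (2 * (sh2 * m%:R + sw2))) *
  PB N m th * prior x mu sig delta2 th.

(* Iterated expectation w.r.t. the product of densities q k on (0,1), over the
   coordinates k < K that are not skipped; skipped coordinates stay as in th. *)
Fixpoint Eiter (q : nat -> R -> R) (skip : pred nat) (K : nat)
    (f : (nat -> R) -> R) (th : nat -> R) : R :=
  match K with
  | 0 => f th
  | K'.+1 => if skip K' then Eiter q skip K' f th
             else Rintegral (@lebesgue_measure R) `]0, 1[
                    (fun t => q K' t * Eiter q skip K' f (upd th K' t))
  end.

(* finiteness of the iterated expectation: every integral involved is
   (Lebesgue) integrable *)
Fixpoint Eiter_ok (q : nat -> R -> R) (skip : pred nat) (K : nat)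
    (f : (nat -> R) -> R) (th : nat -> R) : Prop :=
  match K with
  | 0 => True
  | K'.+1 => if skip K' then Eiter_ok q skip K' f th
             else (@lebesgue_measure R).-integrable `]0, 1[
                    (fun t => (q K' t * Eiter q skip K' f (upd th K' t))%:E)
                  /\ (forall t, 0 < t < 1 -> Eiter_ok q skip K' f (upd th K' t))
  end.

Definition th0 : nat -> R := fun _ => 0.

Definition Eth (N : nat) (q : nat -> R -> R) (f : (nat -> R) -> R) : R :=
  Eiter q pred0 N f th0.

Definition ETth_but (N : nat) (qT : nat -> R) (q : nat -> R -> R) (n : nat)
    (F : nat -> (nat -> R) -> R) (z : R) : R :=
  \sum_(m < N.+1) qT m * Eiter q (pred1 n) N (F m) (upd th0 n z).

Definition F1 (N : nat) (q : nat -> R -> R) (m : nat) : R :=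
  expR (Eth N q (fun th => ln (Re (Ssum N m th)))).

Definition F2 (N : nat) (qT : nat -> R) (q : nat -> R -> R) (n : nat) (z : R) : R :=
  expR (ETth_but N qT q n (fun m th => ln (Re (Ssum N m th))) z).

Definition ga (N M : nat) (y : 'I_M -> C) (sh2 sw2 : R) (q : nat -> R -> R)
    (m : nat) : R :=
  F1 N q m / (sw2 + m%:R * sh2) ^+ M *
  expR (- ynorm2 y / (2 * (sw2 + m%:R * sh2))).

Definition gb (N : nat) (x mu sig : 'I_N -> R) (delta2 : R) (qT : nat -> R)
    (q : nat -> R -> R) (n : 'I_N) (z : R) : R :=
  F2 N qT q n z / (z * (1 - z)) *
  expR (- (1 / (2 * delta2)) * (- sig n * ln (1 / z - 1) + mu n - x n) ^+ 2).

End Model.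

(* Main.v *)
Require Import Defs.
From HB Require Import structures.
From mathcomp Require Import all_boot all_order all_algebra.
From mathcomp Require Import all_classical all_reals all_analysis.
From mathcomp Require Import complex.
From mathcomp Require Import ring lra zify.
Import Order.TTheory GRing.Theory Num.Theory.
Local Open Scope ring_scope.
Local Open Scope classical_set_scope.

Section S.
Variable R : realType.
Lemma cmul (a b c d : R) : (Complex a b : R[i]) * Complex c d = Complex (a*c - b*d) (a*d + b*c).
Proof. by []. Qed.

Lemma cunitX N d : cunit R N ^+ d =
  Complex (cos (d%:R * (2 * pi / N.+1%:R))) (sin (d%:R * (2 * pi / N.+1%:R))).
Proof.
elim: d => [|d IH]; first by rewrite expr0 mul0r cos0 sin0.
rewrite exprSr IH /cunit cmul -cosD [X in Complex _ X]addrC -sinD.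
by rewrite -[d.+1%:R]natr1 [(d%:R + 1) * _]mulrDl mul1r.
Qed.

Lemma cunitN1 N : cunit R N ^+ N.+1 = 1.
Proof.
rewrite cunitX mulrCA mulfV ?pnatr_eq0 // mulr1.
by rewrite mulr_natl cos2pi sin2pi.
Qed.

Lemma cos_lt1 (x : R) : 0 < x < pi *+ 2 -> cos x < 1.
Proof.
move=> /andP[x0 x2].
have -> : x = (x / 2) *+ 2 by rewrite -mulr_natr mulfVK ?pnatr_eq0.
rewrite cos_mulr2n cos2sin2.
have s0 : 0 < sin (x / 2).
  apply: sin_gt0_pi; rewrite divr_gt0 //= ltr_pdivrMr // mulr_natr //.
have := mulr_gt0 s0 s0; rewrite -expr2. lra.
Qed.

Lemma cunitX_neq1 N d : (0 < d < N.+1)%N -> cunit R N ^+ d != 1.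
Proof.
move=> /andP[d0 dN]; rewrite cunitX; apply/negP => /eqP [] hc _.
suff : cos (d%:R * (2 * pi / N.+1%:R)) < 1 :> R by rewrite hc ltxx.
apply: cos_lt1.
have hN : (0 : R) < N.+1%:R by rewrite ltr0n.
apply/andP; split.
  by rewrite mulr_gt0 ?ltr0n // divr_gt0 // mulr_gt0 // pi_gt0.
have -> : d%:R * (2 * pi / N.+1%:R) = (d%:R / N.+1%:R) * (pi *+ 2) :> R.
  by rewrite mulr2n; field; rewrite addrC natr1 pnatr_eq0.
rewrite gtr_pMl; last by rewrite pmulrn_rgt0 // pi_gt0.
by rewrite ltr_pdivrMr // mul1r ltr_nat.
Qed.
End S.
Section S3.
Variable R : realType.
Local Notation c N := (cunit R N).

Lemma cunit_neq0 N : c N != 0.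
Proof.
apply/negP => /eqP h; have := cunitN1 R N; rewrite h expr0n /= => /eqP.
by rewrite eq_sym oner_eq0.
Qed.

Lemma sum_cunit N j m : (j <= N)%N -> (m <= N)%N ->
  \sum_(l < N.+1) c N ^- (l * m) * c N ^+ (l * j) = if j == m then N.+1%:R else 0.
Proof.
move=> jN mN.
set z := c N ^+ j * (c N ^+ m)^-1.
have hz : forall l : 'I_N.+1, c N ^- (l * m) * c N ^+ (l * j) = z ^+ l.
  move=> l; rewrite /z exprMn exprVn -!exprM mulnC [(l * j)%N]mulnC mulrC //.
under eq_bigr do rewrite hz.
have cm0 : c N ^+ m != 0 by rewrite expf_neq0 // cunit_neq0.
have [ejm|jm] := eqVneq j m.
  have -> : z = 1 by rewrite /z ejm mulfV.
  by under eq_bigr do rewrite expr1n; rewrite sumr_const card_ord.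
have z1 : z != 1.
  apply/negP => /eqP hz1.
  have e : c N ^+ j = c N ^+ m.
    by move: hz1; rewrite /z => /(congr1 (fun t => t * c N ^+ m)); rewrite mulfVK // mul1r.
  have [jlm|mlj|ejm'] := ltngtP j m.
  - have h1 : c N ^+ j * c N ^+ (m - j) = c N ^+ j * 1.
      by rewrite -exprD (subnKC (ltnW jlm)) mulr1 e.
    move/eqP: (mulfI (expf_neq0 j (cunit_neq0 N)) h1); apply/negP.
    by apply: cunitX_neq1; rewrite subn_gt0 jlm /= ltn_subLR ?(ltnW jlm) //; lia.
  - have h1 : c N ^+ m * c N ^+ (j - m) = c N ^+ m * 1.
      by rewrite -exprD (subnKC (ltnW mlj)) mulr1 e.
    move/eqP: (mulfI (expf_neq0 m (cunit_neq0 N)) h1); apply/negP.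
    by apply: cunitX_neq1; rewrite subn_gt0 mlj /= ltn_subLR ?(ltnW mlj) //; lia.
  - by move: jm; rewrite ejm' eqxx.
have zN : z ^+ N.+1 = 1.
  by rewrite /z exprMn exprVn -!exprM mulnC exprM cunitN1 expr1n mulnC exprM cunitN1 expr1n invr1 mulr1.
have := subrX1 z N.+1; rewrite zN subrr => /esym /eqP; rewrite mulf_eq0 subr_eq0 (negbTE z1) /=.
by move/eqP.
Qed.
End S3.
Section S4.
Local Open Scope complex_scope.
Variable R : realType.
Local Notation c N := (cunit R N).

Definition W {N} (th : nat -> R) (f : {ffun 'I_N -> bool}) : R :=
  \prod_(k < N) (if f k then th k else 1 - th k).
Definition sf {N} (f : {ffun 'I_N -> bool}) : nat := \sum_(k < N) (f k : nat).

Lemma sf_le N (f : {ffun 'I_N -> bool}) : (sf f <= N)%N.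
Proof.
rewrite /sf; apply: (@leq_trans (\sum_(k < N) 1)).
  by apply: leq_sum => k _; exact: leq_b1.
by rewrite sum_nat_const card_ord muln1.
Qed.

Lemma sum_lt_min N m : \sum_(k < N) ((k < m)%N : nat) = minn m N.
Proof.
elim: N => [|N IH]; first by rewrite big_ord0; lia.
rewrite big_ord_recr /= IH; case: ltnP => h /=; lia.
Qed.

Lemma Ssum_expand N m th : (m <= N)%N ->
  Ssum N m th = N.+1%:R * \sum_(f : {ffun 'I_N -> bool} | sf f == m) (W th f)%:C.
Proof.
move=> mN; rewrite /Ssum.
have step1 : forall l : 'I_N.+1,
    \prod_(k < N) (1 + (c N ^+ l - 1) * (th k)%:C) =
    \sum_(f : {ffun 'I_N -> bool}) (W th f)%:C * c N ^+ (l * sf f).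
  move=> l.
  transitivity (\prod_(k < N) \sum_(b : bool)
      (if b then (th k)%:C * c N ^+ l else (1 - th k)%:C)).
    by apply: eq_bigr => k _; rewrite big_bool /= rmorphB rmorph1; ring.
  rewrite bigA_distr_bigA; apply: eq_bigr => f _.
  rewrite /W rmorph_prod /sf big_distrr /= -prodrXr -big_split /=.
  apply: eq_bigr => k _; case: (f k) => /=.
    by rewrite muln1.
  by rewrite muln0 expr0 mulr1.
under eq_bigr do rewrite step1 big_distrr /=.
rewrite exchange_big /=.
transitivity (\sum_(f : {ffun 'I_N -> bool}) (W th f)%:C *
    (\sum_(l < N.+1) c N ^- (l * m) * c N ^+ (l * sf f))).
  apply: eq_bigr => f _; rewrite big_distrr; apply: eq_bigr => l _.
  by rewrite mulrCA.
transitivity (\sum_(f : {ffun 'I_N -> bool}) (W th f)%:C *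
    (if sf f == m then N.+1%:R else 0)).
  apply: eq_bigr => f _; congr (_ * _); apply: sum_cunit => //; exact: sf_le.
rewrite big_distrr [RHS]big_mkcond /=; apply: eq_bigr => f _.
by case: eqP => _; rewrite ?mulr0 // mulrC.
Qed.

Lemma ReSsum N m th : (m <= N)%N ->
  complex.Re (Ssum N m th) = N.+1%:R * \sum_(f : {ffun 'I_N -> bool} | sf f == m) W th f.
Proof.
move=> mN; rewrite Ssum_expand // -rmorph_sum -(rmorph_nat (real_complex R)) -rmorphM.
by [].
Qed.

Lemma ReSsum_gt0 N m (th : nat -> R) : (m <= N)%N -> (forall k : 'I_N, 0 < th k < 1) ->
  0 < complex.Re (Ssum N m th).
Proof.
move=> mN hth; rewrite ReSsum // mulr_gt0 ?ltr0n //.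
pose f0 := [ffun k : 'I_N => (k < m)%N].
have hf0 : sf f0 == m.
  rewrite /sf; under eq_bigr do rewrite ffunE.
  by rewrite sum_lt_min; apply/eqP; lia.
rewrite (bigD1 f0) //=.
have p : 0 < W th f0.
  apply: prodr_gt0 => k _; have := hth k; case: (f0 k) => /andP[h1 h2].
    by [].
  by rewrite subr_gt0.
have q : 0 <= \sum_(i | (sf i == m) && (i != f0)) W th i.
  apply: sumr_ge0 => f _; apply: prodr_ge0 => k _; have := hth k.
  case: (f k) => /andP[h1 h2]; first exact: ltW.
  by rewrite subr_ge0 ltW.
lra.
Qed.
End S4.
Section S5.
Variable R : realType.
Local Notation mu := (@lebesgue_measure R).
Local Notation D := (`]0, 1[ : set (measurableTypeR R)).

Lemma mD : measurable D.
Proof. exact: measurable_itv. Qed.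

Lemma inD t : t \in D -> 0 < t < 1.
Proof. by rewrite inE /= in_itv. Qed.

Lemma intZ a (h : R -> R) : mu.-integrable D (fun t => (h t)%:E) ->
  mu.-integrable D (fun t => (a * h t)%:E).
Proof.
move=> ih; apply: (eq_integrable mD _ _ _ (integrableZl mD a ih)) => t _.
by rewrite EFinM.
Qed.

Lemma intD (h1 h2 : R -> R) : mu.-integrable D (fun t => (h1 t)%:E) ->
  mu.-integrable D (fun t => (h2 t)%:E) ->
  mu.-integrable D (fun t => (h1 t + h2 t)%:E).
Proof.
move=> i1 i2; apply: (eq_integrable mD _ _ _ (integrableD mD i1 i2)) => t _.
by rewrite EFinD.
Qed.

Lemma Eiter_ext q skip K (f g : (nat -> R) -> R) th :
  (forall th', (forall k, (k < K)%N -> ~~ skip k -> 0 < th' k < 1) ->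
     (forall k, (K <= k)%N || skip k -> th' k = th k) -> f th' = g th') ->
  Eiter q skip K f th = Eiter q skip K g th.
Proof.
elim: K th => [|K IH] th H /=.
  by apply: H => // k _; rewrite ltn0.
case: ifP => sk.
  apply: IH => th' h1 h2; apply: H => k.
    move=> kK nsk; have [kK'|kK'|ekK] := ltngtP k K.
    - exact: h1.
    - by move: kK; rewrite ltnS leqNgt kK'.
    - by move: nsk; rewrite ekK sk.
  move=> hk; apply: h2; case/orP: hk => [hk|->]; last by rewrite orbT.
  by rewrite (ltnW hk).
apply: eq_Rintegral => t /inD ht; congr (_ * _).
apply: IH => th' h1 h2; apply: H => k.
  move=> kK nsk; have [kK'|kK'|ekK] := ltngtP k K.
  - exact: h1.
  - by move: kK; rewrite ltnS leqNgt kK'.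
  - by rewrite ekK (h2 K) ?leqnn // /upd eqxx.
move=> hk; rewrite h2; last first.
  by case/orP: hk => [hk|->]; [rewrite (ltnW hk) | rewrite orbT].
rewrite /upd; case: eqP => // ekK.
by move: hk; rewrite ekK ltnn sk.
Qed.

Lemma Eiter_indep q n K (f : (nat -> R) -> R) th1 th2 :
  (forall a b, (forall k, k != n -> a k = b k) -> f a = f b) ->
  (forall k, k != n -> th1 k = th2 k) ->
  Eiter q (pred1 n) K f th1 = Eiter q (pred1 n) K f th2.
Proof.
move=> hf; elim: K th1 th2 => [|K IH] th1 th2 h12 /=; first exact: hf.
case: ifP => sk; first exact: IH.
apply: eq_Rintegral => t _; congr (_ * _); apply: IH => k kn.
by rewrite /upd; case: eqP => // _; exact: h12.
Qed.

Lemma Eiter_lin q skip K (f g : (nat -> R) -> R) a b th :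
  Eiter_ok q skip K f th -> Eiter_ok q skip K g th ->
  Eiter_ok q skip K (fun th => a * f th + b * g th) th /\
  Eiter q skip K (fun th => a * f th + b * g th) th =
    a * Eiter q skip K f th + b * Eiter q skip K g th.
Proof.
elim: K th => [|K IH] th /=; first by [].
case: ifP => sk; first exact: IH.
move=> [If Hf] [Ig Hg].
have e : {in D, (fun t => q K t * Eiter q skip K (fun th => a * f th + b * g th) (upd th K t)) =1
   (fun t => a * (q K t * Eiter q skip K f (upd th K t)) +
             b * (q K t * Eiter q skip K g (upd th K t)))}.
  move=> t /inD ht; rewrite (IH _ (Hf t ht) (Hg t ht)).2 /=; ring.
have IfZ := @intZ a (fun t => q K t * Eiter q skip K f (upd th K t)) If.
have IgZ := @intZ b (fun t => q K t * Eiter q skip K g (upd th K t)) Ig.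
split; first split.
- apply: (eq_integrable mD _ _ _ (intD _ _ IfZ IgZ)) => t tD.
  by rewrite e.
- by move=> t ht; exact: (IH _ (Hf t ht) (Hg t ht)).1.
rewrite (eq_Rintegral _ e) RintegralD //; try exact: mD.
by rewrite !RintegralZl //; exact: mD.
Qed.

Lemma Eiter_const q skip K (f : (nat -> R) -> R) th :
  (forall k, (k < K)%N -> mu.-integrable D (fun t => (q k t)%:E)) ->
  (forall k, (k < K)%N -> Rintegral mu D (q k) = 1) ->
  (forall th k t, ~~ skip k -> f (upd th k t) = f th) ->
  Eiter_ok q skip K f th /\ Eiter q skip K f th = f th.
Proof.
move=> hi h1 hf; elim: K hi h1 th => [|K IH] hi h1 th /=; first by [].
have hi' : forall k, (k < K)%N -> mu.-integrable D (fun t => (q k t)%:E).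
  by move=> k kK; apply: hi; rewrite ltnS ltnW.
have h1' : forall k, (k < K)%N -> Rintegral mu D (q k) = 1.
  by move=> k kK; apply: h1; rewrite ltnS ltnW.
case: ifP => sk; first exact: IH.
have e : forall t, q K t * Eiter q skip K f (upd th K t) = q K t * f th.
  by move=> t; rewrite (IH hi' h1' _).2 hf ?sk.
split; first split.
- apply: (eq_integrable mD _ _ _ (integrableZr mD (f th) (hi K (ltnSn K)))) => t _.
  by rewrite e EFinM.
- by move=> t _; exact: (IH hi' h1' _).1.
rewrite (eq_Rintegral _ (fun t _ => e t)) RintegralZr; first by rewrite h1 ?mul1r.
  exact: mD.
exact: hi.
Qed.
End S5.
Section S6.
Variable R : realType.

Lemma ln_prod (I : Type) (r : seq I) (P : pred I) (F : I -> R) :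
  (forall i, P i -> 0 < F i) ->
  ln (\prod_(i <- r | P i) F i) = \sum_(i <- r | P i) ln (F i).
Proof.
move=> hF; elim: r => [|i r IH]; first by rewrite !big_nil ln1.
rewrite !big_cons; case: ifP => Pi //.
rewrite lnM ?IH // posrE; first exact: hF.
by apply: prodr_gt0 => j Pj; exact: hF.
Qed.

Definition good N (th : nat -> R) := forall k : 'I_N, 0 < th k < 1.

Lemma prior_parts_gt0 {N} (sig : 'I_N -> R) (delta2 : R) (th : nat -> R) :
  (forall n, 0 < sig n) -> 0 < delta2 -> good N th ->
  0 < \prod_(n < N) (sig n / (th n - th n ^+ 2)) /\
  0 < 1 / ((Num.sqrt (2 * pi)) ^+ N * (Num.sqrt delta2) ^+ N).
Proof.
move=> hs hd hth; split.
  apply: prodr_gt0 => k _; have /andP[h0 h1] := hth k.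
  apply: divr_gt0 => //; rewrite expr2 -{1}(mulr1 (th k)) -mulrBr.
  by rewrite mulr_gt0 // subr_gt0.
rewrite divr_gt0 // mulr_gt0 // exprn_gt0 // sqrtr_gt0 //.
by rewrite mulr_gt0 // pi_gt0.
Qed.

Lemma prior_gt0 {N} (x mu sig : 'I_N -> R) (delta2 : R) (th : nat -> R) :
  (forall n, 0 < sig n) -> 0 < delta2 -> good N th ->
  0 < prior x mu sig delta2 th.
Proof.
move=> hs hd hth; have [h1 h2] := @prior_parts_gt0 N sig delta2 th hs hd hth.
by rewrite /prior mulr_gt0 ?expR_gt0 // mulr_gt0.
Qed.

Lemma ln_joint N M (y : 'I_M -> R[i]) (x mu sig : 'I_N -> R) (delta2 sh2 sw2 : R) m th :
  (m <= N)%N -> (forall n, 0 < sig n) -> 0 < delta2 -> 0 < sh2 -> 0 < sw2 -> good N th ->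
  ln (joint y x mu sig delta2 sh2 sw2 m th) =
  ln (1 / (2 * pi * (sh2 * m%:R + sw2)) ^+ M *
      expR (- ynorm2 y / (2 * (sh2 * m%:R + sw2)))) + ln (N.+1%:R^-1) +
  ln (prior x mu sig delta2 th) + ln (complex.Re (Ssum N m th)).
Proof.
move=> mN hs hd hh hw hth.
have hS : 0 < complex.Re (Ssum N m th) by apply: ReSsum_gt0.
have hP := @prior_gt0 N x mu sig delta2 th hs hd hth.
have hs0 : 0 < sh2 * m%:R + sw2 by rewrite ltr_wpDl // mulr_ge0 // ltW.
have hA : 0 < 1 / (2 * pi * (sh2 * m%:R + sw2)) ^+ M *
      expR (- ynorm2 y / (2 * (sh2 * m%:R + sw2))).
  by rewrite mulr_gt0 ?expR_gt0 // divr_gt0 // exprn_gt0 // !mulr_gt0 // pi_gt0.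
have hI : 0 < N.+1%:R^-1 :> R by rewrite invr_gt0 ltr0n.
set A := 1 / _ ^+ M * _ in hA *.
set P := prior x mu sig delta2 th in hP *.
set S := complex.Re _ in hS *.
have -> : joint y x mu sig delta2 sh2 sw2 m th = A * (S * N.+1%:R^-1) * P by [].
rewrite lnM; last 2 first. by rewrite posrE mulr_gt0 // divr_gt0 // ltr0n. by rewrite posrE.
rewrite lnM; last 2 first.
  by rewrite posrE.
  by rewrite posrE divr_gt0 // ltr0n.
rewrite lnM; last 2 first.
  by rewrite posrE.
  by rewrite posrE.
lra.
Qed.

Lemma ln_prior N (x mu sig : 'I_N -> R) (delta2 : R) (th : nat -> R) (n : 'I_N) :
  (forall n, 0 < sig n) -> 0 < delta2 -> good N th ->
  ln (prior x mu sig delta2 th) =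
  ln (sig n) + (ln (1 / (th n * (1 - th n))) +
     (- (1 / (2 * delta2)) * (- sig n * ln (1 / th n - 1) + mu n - x n) ^+ 2)) +
  ((\sum_(k < N | k != n) ln (sig k / (th k - th k ^+ 2))) -
   (\sum_(k < N | k != n) (- sig k * ln (1 / th k - 1) + mu k - x k) ^+ 2) / (2 * delta2)) +
  ln (1 / ((Num.sqrt (2 * pi)) ^+ N * (Num.sqrt delta2) ^+ N)).
Proof.
move=> hs hd hth; have [h1 h2] := @prior_parts_gt0 N sig delta2 th hs hd hth.
have hk : forall k : 'I_N, 0 < sig k / (th k - th k ^+ 2).
  move=> k; have /andP[k0 k1] := hth k.
  apply: divr_gt0 => //; rewrite expr2 -{1}(mulr1 (th k)) -mulrBr.
  by rewrite mulr_gt0 // subr_gt0.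
rewrite /prior lnM; last 2 first.
  by rewrite posrE mulr_gt0.
  by rewrite posrE expR_gt0.
rewrite lnM; last 2 first.
  by rewrite posrE.
  by rewrite posrE.
rewrite expRK.
rewrite ln_prod; last by move=> k _; exact: hk.
rewrite [\sum_(k < N) ln _](bigD1 n) //= [\sum_(k < N) (_ ^+ 2)](bigD1 n) //=.
have /andP[n0 n1] := hth n.
have -> : sig n / (th n - th n ^+ 2) = sig n * (1 / (th n * (1 - th n))).
  by rewrite mulrBr mulr1 expr2 mul1r.
rewrite lnM; last 2 first.
  by rewrite posrE.
  by rewrite posrE divr_gt0 // mulr_gt0 // subr_gt0.
ring.
Qed.
End S6.

Theorem mainTheorem6 (R : realType) (N M : nat) (hN : (1 <= N)%N) (hM : (1 <= M)%N)
  (y : 'I_M -> R[i]) (x mu sig : 'I_N -> R) (hsig : forall n, 0 < sig n)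
  (delta2 sh2 sw2 : R) (hd : 0 < delta2) (hh : 0 < sh2) (hw : 0 < sw2)
  (qT : nat -> R)
  (hqT0 : forall m, (m <= N)%N -> 0 <= qT m)
  (hqT1 : \sum_(m < N.+1) qT m = 1)
  (q : nat -> R -> R)
  (hq0 : forall k, (k < N)%N -> forall t, 0 < t < 1 -> 0 <= q k t)
  (hqi : forall k, (k < N)%N ->
     (@lebesgue_measure R).-integrable `]0, 1[ (fun t => (q k t)%:E))
  (hq1 : forall k, (k < N)%N -> Rintegral (@lebesgue_measure R) `]0, 1[ (q k) = 1)
  (* all expectations involved are finite *)
  (hfinS : forall m, (m <= N)%N ->
     Eiter_ok q pred0 N (fun th => ln (complex.Re (Ssum N m th))) (th0 R))
  (hfinJ : forall m, (m <= N)%N ->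
     Eiter_ok q pred0 N (fun th => ln (joint y x mu sig delta2 sh2 sw2 m th)) (th0 R))
  (hfinS' : forall (n : 'I_N) m, (m <= N)%N -> forall z, 0 < z < 1 ->
     Eiter_ok q (pred1 (n : nat)) N (fun th => ln (complex.Re (Ssum N m th)))
       (upd (th0 R) n z))
  (hfinJ' : forall (n : 'I_N) m, (m <= N)%N -> forall z, 0 < z < 1 ->
     Eiter_ok q (pred1 (n : nat)) N
       (fun th => ln (joint y x mu sig delta2 sh2 sw2 m th)) (upd (th0 R) n z)) :
  (forall m : 'I_N.+1,
     expR (Eth N q (fun th => ln (joint y x mu sig delta2 sh2 sw2 m th))) /
     (\sum_(k < N.+1) expR (Eth N q (fun th => ln (joint y x mu sig delta2 sh2 sw2 k th))))
     = ga N y sh2 sw2 q m / (\sum_(k < N.+1) ga N y sh2 sw2 q k))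
  /\
  (forall n : 'I_N,
     (* the unnormalized q*(theta_n) is normalizable *)
     (@lebesgue_measure R).-integrable `]0, 1[ (fun z =>
        (expR (ETth_but N qT q n
           (fun m th => ln (joint y x mu sig delta2 sh2 sw2 m th)) z))%:E) ->
     forall z, 0 < z < 1 ->
       expR (ETth_but N qT q n
               (fun m th => ln (joint y x mu sig delta2 sh2 sw2 m th)) z) /
       Rintegral (@lebesgue_measure R) `]0, 1[ (fun z' =>
          expR (ETth_but N qT q n
               (fun m th => ln (joint y x mu sig delta2 sh2 sw2 m th)) z'))
       = gb x mu sig delta2 qT q n z /
         Rintegral (@lebesgue_measure R) `]0, 1[ (gb x mu sig delta2 qT q n)).
Proof.
pose lnS m := fun th : nat -> R => ln (complex.Re (Ssum N m th)).
pose lnJ m := fun th : nat -> R => ln (joint y x mu sig delta2 sh2 sw2 m th).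
pose gm m := fun th : nat -> R => 1 * lnJ m th + (-1) * lnS m th.
pose cm (m : nat) := ln (1 / (2 * pi * (sh2 * m%:R + sw2)) ^+ M *
   expR (- ynorm2 y / (2 * (sh2 * m%:R + sw2)))).
have hg : forall m th, (m <= N)%N -> good R N th ->
    gm m th = 1 * gm 0%N th + (cm m - cm 0%N) * 1.
  move=> m th mN hth; rewrite /gm /lnJ /lnS /cm.
  rewrite (@ln_joint R N M y x mu sig delta2 sh2 sw2 m th mN hsig hd hh hw hth).
  rewrite (@ln_joint R N M y x mu sig delta2 sh2 sw2 0%N th (leq0n N) hsig hd hh hw hth).
  ring.
have Estep : forall (skip : pred nat) th,
    (forall th', (forall k, (k < N)%N -> ~~ skip k -> 0 < th' k < 1) ->
       (forall k, (N <= k)%N || skip k -> th' k = th k) -> good R N th') ->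
    (forall m, (m <= N)%N -> Eiter_ok q skip N (lnJ m) th) ->
    (forall m, (m <= N)%N -> Eiter_ok q skip N (lnS m) th) ->
    forall m, (m <= N)%N ->
      Eiter q skip N (lnJ m) th =
      Eiter q skip N (lnS m) th + (cm m - cm 0%N) + Eiter q skip N (gm 0%N) th.
  move=> skip th hgood hJ hS m mN.
  have e_m : Eiter q skip N (gm m) th =
      1 * Eiter q skip N (lnJ m) th + (-1) * Eiter q skip N (lnS m) th :=
    (@Eiter_lin R q skip N (lnJ m) (lnS m) 1 (-1) th (hJ m mN) (hS m mN)).2.
  have ok0 : Eiter_ok q skip N (gm 0%N) th :=
    (@Eiter_lin R q skip N (lnJ 0%N) (lnS 0%N) 1 (-1) th
       (hJ 0%N (leq0n N)) (hS 0%N (leq0n N))).1.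
  have hc := @Eiter_const R q skip N (fun _ => 1) th hqi hq1 (fun _ _ _ _ => erefl).
  have hc2 : Eiter q skip N (fun _ => 1) th = 1 := hc.2.
  have e1 : Eiter q skip N (fun th => 1 * gm 0%N th + (cm m - cm 0%N) * 1) th =
      1 * Eiter q skip N (gm 0%N) th + (cm m - cm 0%N) * Eiter q skip N (fun _ => 1) th :=
    (@Eiter_lin R q skip N (gm 0%N) (fun _ => 1) 1 (cm m - cm 0%N) th ok0 hc.1).2.
  have e2 : Eiter q skip N (gm m) th =
      Eiter q skip N (fun th => 1 * gm 0%N th + (cm m - cm 0%N) * 1) th.
    apply: Eiter_ext => th' h1 h2; apply: hg => //; exact: hgood.
  rewrite hc2 in e1.
  lra.
have hcm : forall m : nat, 0 < 1 / (2 * pi * (sh2 * m%:R + sw2)) ^+ M *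
    expR (- ynorm2 y / (2 * (sh2 * m%:R + sw2))).
  move=> m; have hs0 : 0 < sh2 * m%:R + sw2 by rewrite ltr_wpDl // mulr_ge0 // ltW.
  by rewrite mulr_gt0 ?expR_gt0 // divr_gt0 // exprn_gt0 // !mulr_gt0 // pi_gt0.
split.
  have E1 : forall m, (m <= N)%N -> Eth N q (lnJ m) =
      Eth N q (lnS m) + (cm m - cm 0%N) + Eth N q (gm 0%N).
    apply: Estep => //.
    by move=> th' h1 h2 k; apply: h1.
  pose Kc := expR (Eth N q (gm 0%N) - cm 0%N) / (2 * pi) ^+ M.
  have Kc0 : Kc != 0.
    rewrite /Kc mulf_neq0 //; first exact: lt0r_neq0 (expR_gt0 _).
    by rewrite invr_eq0 expf_neq0 // lt0r_neq0 // mulr_gt0 // pi_gt0.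
  have X1 : forall m, (m <= N)%N -> expR (Eth N q (lnJ m)) = ga N y sh2 sw2 q m * Kc.
    move=> m mN; rewrite E1 //.
    have -> : ga N y sh2 sw2 q m = expR (Eth N q (lnS m)) / (sw2 + m%:R * sh2) ^+ M *
        expR (- ynorm2 y / (2 * (sw2 + m%:R * sh2))) by [].
    rewrite /Kc.
    set K := Eth N q (gm 0%N). set L := Eth N q (lnS m). set C0 := cm 0%N.
    have -> : L + (cm m - C0) + K = L + cm m + (K - C0) by ring.
    rewrite expRD expRD {1}/cm lnK ?posrE //.
    have -> : sh2 * m%:R + sw2 = sw2 + m%:R * sh2 by rewrite addrC mulrC.
    have hs0 : 0 < sw2 + m%:R * sh2 by rewrite ltr_pwDl // mulr_ge0 // ltW.
    rewrite exprMn; field.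
    by rewrite !expf_neq0 // lt0r_neq0 // ?mulr_gt0 // pi_gt0.
  move=> m; rewrite (X1 m (ltn_ord m)).
  under eq_bigr => k _ do rewrite (X1 k (ltn_ord k)).
  by rewrite -big_distrl /= invfM mulrACA mulfV // mulr1.
move=> n hint z hz.
have goodz : forall z', 0 < z' < 1 -> forall th',
    (forall k, (k < N)%N -> ~~ pred1 (n : nat) k -> 0 < th' k < 1) ->
    (forall k, (N <= k)%N || pred1 (n : nat) k -> th' k = upd (th0 R) n z' k) ->
    good R N th'.
  move=> z' hz' th' h1 h2 k; have [ekn|nkn] := eqVneq (k : nat) (n : nat).
    by rewrite ekn (h2 n) /= ?eqxx ?orbT // /upd eqxx.
  by apply: h1 => //=.
have E2 : forall z', 0 < z' < 1 -> forall m, (m <= N)%N ->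
    Eiter q (pred1 (n : nat)) N (lnJ m) (upd (th0 R) n z') =
    Eiter q (pred1 (n : nat)) N (lnS m) (upd (th0 R) n z') + (cm m - cm 0%N) +
    Eiter q (pred1 (n : nat)) N (gm 0%N) (upd (th0 R) n z').
  move=> z' hz'; apply: Estep.
  - exact: goodz.
  - by move=> m mN; exact: hfinJ'.
  - by move=> m mN; exact: hfinS'.
pose aN (z' : R) := ln (1 / (z' * (1 - z'))) +
  (- (1 / (2 * delta2)) * (- sig n * ln (1 / z' - 1) + mu n - x n) ^+ 2).
pose bN (th : nat -> R) :=
  (\sum_(k < N | k != n) ln (sig k / (th k - th k ^+ 2))) -
  (\sum_(k < N | k != n) (- sig k * ln (1 / th k - 1) + mu k - x k) ^+ 2) / (2 * delta2).
pose Cst := cm 0%N + ln (N.+1%:R^-1) + ln (sig n) +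
  ln (1 / ((Num.sqrt (2 * pi)) ^+ N * (Num.sqrt delta2) ^+ N)).
pose Kb := Eiter q (pred1 (n : nat)) N (fun th => Cst + bN th) (upd (th0 R) n (1 / 2)).
have hG : forall z', 0 < z' < 1 ->
    Eiter q (pred1 (n : nat)) N (gm 0%N) (upd (th0 R) n z') = aN z' + Kb.
  move=> z' hz'.
  have ok0 : Eiter_ok q (pred1 (n : nat)) N (gm 0%N) (upd (th0 R) n z') :=
    (@Eiter_lin R q _ N (lnJ 0%N) (lnS 0%N) 1 (-1) _
       (hfinJ' n 0%N (leq0n N) z' hz') (hfinS' n 0%N (leq0n N) z' hz')).1.
  have hc := @Eiter_const R q (pred1 (n : nat)) N (fun th => aN (th n))
      (upd (th0 R) n z') hqi hq1.
  have hc' : forall th k t, ~~ pred1 (n : nat) k -> aN (upd th k t n) = aN (th n).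
    move=> th k t hk; rewrite /upd; case: eqP => // e.
    by move: hk; rewrite /= e eqxx.
  have [hc1 hc2] := hc hc'.
  rewrite /= /upd eqxx in hc2.
  have eF : Eiter q (pred1 (n : nat)) N
      (fun th => 1 * gm 0%N th + (-1) * aN (th n)) (upd (th0 R) n z') =
      1 * Eiter q (pred1 (n : nat)) N (gm 0%N) (upd (th0 R) n z') +
      (-1) * Eiter q (pred1 (n : nat)) N (fun th => aN (th n)) (upd (th0 R) n z') :=
    (@Eiter_lin R q _ N (gm 0%N) (fun th => aN (th n)) 1 (-1) _ ok0 hc1).2.
  have eX : Eiter q (pred1 (n : nat)) N
      (fun th => 1 * gm 0%N th + (-1) * aN (th n)) (upd (th0 R) n z') =
      Eiter q (pred1 (n : nat)) N (fun th => Cst + bN th) (upd (th0 R) n z').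
    apply: Eiter_ext => th' h1 h2; have hth := goodz z' hz' th' h1 h2.
    rewrite /gm /lnJ /lnS.
    rewrite (@ln_joint R N M y x mu sig delta2 sh2 sw2 0%N th' (leq0n N) hsig hd hh hw hth).
    rewrite (@ln_prior R N x mu sig delta2 th' n hsig hd hth) /aN /bN /Cst /cm.
    ring.
  have eI : Eiter q (pred1 (n : nat)) N (fun th => Cst + bN th) (upd (th0 R) n z') = Kb.
    rewrite /Kb; apply: Eiter_indep.
    - move=> a b hab; rewrite /bN.
      have e1 : \sum_(k < N | k != n) ln (sig k / (a k - a k ^+ 2)) =
          \sum_(k < N | k != n) ln (sig k / (b k - b k ^+ 2)).
        by apply: eq_bigr => k hk; rewrite hab.
      have e2 : \sum_(k < N | k != n) (- sig k * ln (1 / a k - 1) + mu k - x k) ^+ 2 =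
          \sum_(k < N | k != n) (- sig k * ln (1 / b k - 1) + mu k - x k) ^+ 2.
        by apply: eq_bigr => k hk; rewrite hab.
      by rewrite e1 e2.
    - by move=> k hk; rewrite /upd (negbTE hk).
  lra.
pose Cq := \sum_(m < N.+1) qT m * (cm m - cm 0%N).
have ET : forall z', 0 < z' < 1 ->
    ETth_but N qT q n (fun m th => ln (joint y x mu sig delta2 sh2 sw2 m th)) z' =
    ETth_but N qT q n (fun m th => ln (complex.Re (Ssum N m th))) z' + (Cq + Kb) + aN z'.
  move=> z' hz'; rewrite /ETth_but /Cq.
  have -> : \sum_(m < N.+1) qT m * Eiter q (pred1 (n : nat)) N
        (fun th => ln (joint y x mu sig delta2 sh2 sw2 m th)) (upd (th0 R) n z') =
      \sum_(m < N.+1) (qT m * Eiter q (pred1 (n : nat)) N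
        (fun th => ln (complex.Re (Ssum N m th))) (upd (th0 R) n z') +
        qT m * (cm m - cm 0%N) + qT m * (Kb + aN z')).
    apply: eq_bigr => m _.
    rewrite (E2 z' hz' m (ltn_ord m)) (hG z' hz').
    rewrite /lnS. ring.
  rewrite !big_split /= -big_distrl /= hqT1 mul1r.
  ring.
have X2 : forall z', 0 < z' < 1 ->
    expR (ETth_but N qT q n (fun m th => ln (joint y x mu sig delta2 sh2 sw2 m th)) z') =
    expR (Cq + Kb) * gb x mu sig delta2 qT q n z'.
  move=> z' hz'; rewrite (ET z' hz').
  have -> : gb x mu sig delta2 qT q n z' =
      expR (ETth_but N qT q n (fun m th => ln (complex.Re (Ssum N m th))) z') /
      (z' * (1 - z')) *
      expR (- (1 / (2 * delta2)) * (- sig n * ln (1 / z' - 1) + mu n - x n) ^+ 2) by [].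
  set A := ETth_but _ _ _ _ _ z'. set B := Cq + Kb.
  have /andP[z0 z1] := hz'.
  have w0 : 0 < 1 / (z' * (1 - z')) by rewrite divr_gt0 // mulr_gt0 // subr_gt0.
  rewrite expRD expRD /aN expRD lnK ?posrE //.
  ring.
have CK0 : expR (Cq + Kb) != 0 by exact: lt0r_neq0 (expR_gt0 _).
have hgbint : (@lebesgue_measure R).-integrable `]0, 1[
    (EFin \o gb x mu sig delta2 qT q n).
  apply: (eq_integrable (mD R) _ _ _ (@intZ R (expR (Cq + Kb))^-1 (fun z' =>
     expR (ETth_but N qT q n (fun m th => ln (joint y x mu sig delta2 sh2 sw2 m th)) z'))
     hint)) => z' hz'.
  by rewrite /= (X2 z' (@inD R _ hz')) mulKf.
have eqI : Rintegral (@lebesgue_measure R) `]0, 1[ (fun z' =>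
    expR (ETth_but N qT q n (fun m th => ln (joint y x mu sig delta2 sh2 sw2 m th)) z')) =
    expR (Cq + Kb) * Rintegral (@lebesgue_measure R) `]0, 1[ (gb x mu sig delta2 qT q n).
  rewrite -(RintegralZl (expR (Cq + Kb)) (mD R) hgbint).
  by apply: eq_Rintegral => z' hz'; exact: X2 z' (@inD R _ hz').
by rewrite (X2 z hz) eqI invfM mulrACA mulfV // mul1r.
Qed.
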